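(* Consider a neutral evolutionary model on $N$ sites given by a replacement rule $p$ satisfying the fixation assumption described in the context, with replacement probabilities $e_{ij}$, death rates $d_i$, total birth rate $B>0$, site-specific fixation probabilities $\rho_i$, overall fixation probability $\rho=\frac{1}{B}\sum_{i=1}^N d_i\rho_i$ and molecular clock rate $K=Nu\rho$ (for a mutation probability $u>0$ per reproduction). If the death rates $d_i$ are constant over all sites $i=1,\ldots,N$, then $\rho=1/N$, and consequently $K=u$.
   Context: There are $N$ sites $1,\ldots,N$, each always occupied by one individual of type M (mutant) or R (resident); a state is $\mathbf{s}=(s_1,\ldots,s_N)\in\{\mathrm{M},\mathrm{R}\}^N$. A replacement event is a pair $(R,\alpha)$ with $R\subseteq\{1,\ldots,N\}$ and $\alpha:R\to\{1,\ldots,N\}$ (the occupant of each $j\in R$ is replaced by an offspring of the occupant of $\alpha(j)$). A replacement rule is a probability distribution $p(R,\alpha)$ on replacement events, independent of the state. The evolutionary Markov chain: at each time-step an event $(R,\alpha)$ is drawn with probability $p(R,\alpha)$ and the new state is $s_i'=s_i$ if $i\notin R$, $s_i'=s_{\alpha(i)}$ if $i\in R$. Fixation assumption: there exist a site $i$ and a finite sequence of replacement events, each of positive probability, such that if these events occur consecutively (from any initial state) every site ends up carrying the type initially at site $i$. Define $e_{ij}=\sum_{(R,\alpha):\, j\in R,\ \alpha(j)=i}p(R,\alpha)$, $b_i=\sum_j e_{ij}$ (birth rate), $d_i=\sum_j e_{ji}$ (death rate), $B=\sum_{i,j}e_{ij}$. The site-specific fixation probability $\rho_i$ is the probability that the chain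 started from the state with M at site $i$ and R elsewhere is eventually absorbed in $(\mathrm{M},\ldots,\mathrm{M})$. *)

(* Defs.v *)
From HB Require Import structures.
From mathcomp Require Import all_boot all_order all_algebra.
From mathcomp Require Import all_classical all_reals all_analysis.
Set Implicit Arguments. Unset Strict Implicit. Unset Printing Implicit Defensive.
Import Order.TTheory GRing.Theory Num.Theory.
Import numFieldNormedType.Exports.
Local Open Scope ring_scope.

(* Sites are 'I_N.  A state assigns to each site a type: true = M (mutant), false = R (resident). *)
Definition state (N : nat) := {ffun 'I_N -> bool}.

(* A replacement event (R, alpha) is encoded as a finite function
   a : 'I_N -> option 'I_N with  j \in R <-> a j = Some (alpha j),
   and  j \notin R <-> a j = None.  This is a bijective encoding. *)
Definition event (N : nat) := {ffun 'I_N -> option 'I_N}.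

Definition is_replacement_rule (R : realType) (N : nat) (p : event N -> R) : Prop :=
  (forall a, 0 <= p a) /\ \sum_(a : event N) p a = 1.

Definition step (N : nat) (a : event N) (s : state N) : state N :=
  [ffun i => if a i is Some j then s j else s i].

Definition run (N : nat) (l : seq (event N)) (s : state N) : state N :=
  foldl (fun s a => step a s) s l.

Definition fixation_assumption (R : realType) (N : nat) (p : event N -> R) : Prop :=
  exists (i : 'I_N) (l : seq (event N)),
    all (fun a => 0 < p a) l /\
    forall (s : state N) (j : 'I_N), run l s j = s i.

Definition trans (R : realType) (N : nat) (p : event N -> R) (s t : state N) : R :=
  \sum_(a : event N | step a s == t) p a.

Fixpoint nstep (R : realType) (N : nat) (p : event N -> R) (n : nat) (s t : state N) : R :=
  match n with
  | 0 => (s == t)%:R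
  | n'.+1 => \sum_(u : state N) trans p s u * nstep p n' u t
  end.

Definition allM (N : nat) : state N := [ffun _ => true].
Definition single (N : nat) (i : 'I_N) : state N := [ffun j => j == i].

(* Site-specific fixation probability: probability of eventual absorption in
   (M,...,M) starting from M at site i only.  Since (M,...,M) is absorbing, this is
   the limit of the (nondecreasing) n-step probabilities of being in (M,...,M). *)
Definition rho_site (R : realType) (N : nat) (p : event N -> R) (i : 'I_N) : R :=
  limn (fun n => nstep p n (single i) (allM N)).

Definition erate (R : realType) (N : nat) (p : event N -> R) (i j : 'I_N) : R :=
  \sum_(a : event N | a j == Some i) p a.
Definition birth (R : realType) (N : nat) (p : event N -> R) (i : 'I_N) : R :=
  \sum_(j : 'I_N) erate p i j.
Definition death (R : realType) (N : nat) (p : event N -> R) (i : 'I_N) : R :=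
  \sum_(j : 'I_N) erate p j i.
Definition Btot (R : realType) (N : nat) (p : event N -> R) : R :=
  \sum_(i : 'I_N) \sum_(j : 'I_N) erate p i j.

Definition rho_overall (R : realType) (N : nat) (p : event N -> R) : R :=
  (Btot p)^-1 * \sum_(i : 'I_N) death p i * rho_site p i.

Definition Kclock (R : realType) (N : nat) (p : event N -> R) (u : R) : R :=
  N%:R * u * rho_overall p.

(* Main.v *)
Require Import Defs.
From HB Require Import structures.
From mathcomp Require Import all_boot all_order all_algebra.
From mathcomp Require Import all_classical all_reals all_analysis.
From mathcomp Require Import ring lra.
Import Order.TTheory GRing.Theory Num.Theory.
Import numFieldNormedType.Exports.
Local Open Scope ring_scope.
Local Open Scope classical_set_scope.
Set Implicit Arguments. Unset Strict Implicit. Unset Printing Implicit Defensive.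

Definition gstep (N : nat) (T : Type) (a : event N) (x : {ffun 'I_N -> T}) : {ffun 'I_N -> T} :=
  [ffun i => if a i is Some j then x j else x i].

Definition grun (N : nat) (T : Type) (l : seq (event N)) (x : {ffun 'I_N -> T}) :=
  foldl (fun s a => gstep a s) x l.

Fixpoint Ex (R : realType) (N : nat) (T : Type) (p : event N -> R) (n : nat)
  (f : {ffun 'I_N -> T} -> R) (x : {ffun 'I_N -> T}) : R :=
  match n with
  | 0 => f x
  | n'.+1 => \sum_(a : event N) p a * Ex p n' f (gstep a x)
  end.

Lemma Ex_ext (R : realType) N T (p : event N -> R) n f g x :
  (forall y, f y = g y) -> @Ex R N T p n f x = Ex p n g x.
Proof.
move=> fg; elim: n x => [|n IH] x /=; first exact: fg.
by apply: eq_bigr => a _; rewrite IH.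
Qed.

Lemma nstepE (R : realType) N (p : event N -> R) n s t :
  nstep p n s t = Ex p n (fun x => (x == t)%:R) s.
Proof.
elim: n s => [|n IH] s //=.
rewrite (partition_big (fun a => step a s) predT) //=.
apply: eq_bigr => u _; rewrite /trans big_distrl /=.
apply: eq_bigr => a /eqP Ha; rewrite IH -Ha //.
Qed.

Lemma Ex_comp (R : realType) N T1 T2 (p : event N -> R) n
  (phi : {ffun 'I_N -> T1} -> {ffun 'I_N -> T2}) f x :
  (forall a y, gstep a (phi y) = phi (gstep a y)) ->
  Ex p n f (phi x) = Ex p n (fun y => f (phi y)) x.
Proof.
move=> H; elim: n x => [|n IH] x //=.
by apply: eq_bigr => a _; rewrite H IH.
Qed.

Lemma Ex_sum (R : realType) N T (I : finType) (p : event N -> R) n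
  (F : I -> {ffun 'I_N -> T} -> R) x :
  Ex p n (fun y => \sum_i F i y) x = \sum_i Ex p n (F i) x.
Proof.
elim: n x => [|n IH] x //=.
rewrite exchange_big /=; apply: eq_bigr => a _.
by rewrite IH big_distrr.
Qed.

Lemma Ex_affine (R : realType) N T (p : event N -> R) n f c k x :
  \sum_a p a = 1 ->
  @Ex R N T p n (fun y => c + k * f y) x = c + k * Ex p n f x.
Proof.
move=> H1; elim: n x => [|n IH] x //=.
under eq_bigr do rewrite IH mulrDr.
rewrite big_split /= -big_distrl /= H1 mul1r; congr (_ + _).
by rewrite big_distrr; apply: eq_bigr => a _; rewrite mulrCA.
Qed.

Lemma Ex_mono (R : realType) N T (p : event N -> R) n f g x :
  (forall a, 0 <= p a) -> (forall y, f y <= g y) ->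
  @Ex R N T p n f x <= Ex p n g x.
Proof.
move=> p0 fg; elim: n x => [|n IH] x /=; first exact: fg.
by apply: ler_sum => a _; rewrite ler_wpM2l.
Qed.

Lemma Ex_ge0 (R : realType) N T (p : event N -> R) n f x :
  (forall a, 0 <= p a) -> (forall y, 0 <= f y) -> 0 <= @Ex R N T p n f x.
Proof.
move=> p0 f0; elim: n x => [|n IH] x //=.
by apply: sumr_ge0 => a _; rewrite mulr_ge0.
Qed.

Lemma Ex_add (R : realType) N T (p : event N -> R) n m f x :
  @Ex R N T p (n + m) f x = Ex p n (Ex p m f) x.
Proof.
elim: n x => [|n IH] x //=.
by apply: eq_bigr => a _; rewrite IH.
Qed.

Lemma Ex_incr (R : realType) N T (p : event N -> R) n f x :
  (forall a, 0 <= p a) -> \sum_a p a = 1 ->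
  (forall a y, f y <= f (gstep a y)) ->
  @Ex R N T p n f x <= Ex p n.+1 f x.
Proof.
move=> p0 p1 H; rewrite -addn1 Ex_add; apply: Ex_mono => // y /=.
rewrite -[f y]mul1r -p1 big_distrl /=.
by apply: ler_sum => a _; rewrite ler_wpM2l.
Qed.

Lemma Ex_path (R : realType) N T (p : event N -> R) f (l : seq (event N)) x :
  (forall a, 0 <= p a) -> (forall y, 0 <= f y) ->
  (\prod_(a <- l) p a) * f (grun l x) <= @Ex R N T p (size l) f x.
Proof.
move=> p0 f0; elim: l x => [|a l IH] x /=; first by rewrite big_nil mul1r.
rewrite big_cons -mulrA (bigD1 a) //=.
apply: (@le_trans _ _ (p a * Ex p (size l) f (gstep a x))).
  by rewrite ler_wpM2l // IH.
by rewrite lerDl sumr_ge0 // => b _; rewrite mulr_ge0 ?Ex_ge0.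
Qed.

Definition phi (N : nat) (s : state N) (g : {ffun 'I_N -> 'I_N}) : state N :=
  [ffun j => s (g j)].

Lemma phi_step N (a : event N) s g : gstep a (phi s g) = phi s (gstep a g).
Proof. by apply/ffunP => j; rewrite !ffunE; case: (a j) => [k|]; rewrite ?ffunE. Qed.

Lemma run_phi N (l : seq (event N)) s g : run l (phi s g) = phi s (grun l g).
Proof.
elim: l g => [|a l IH] g //.
change (run l (gstep a (phi s g)) = phi s (grun l (gstep a g))).
by rewrite phi_step IH.
Qed.

Definition fi (R : realType) (N : nat) (i : 'I_N) (g : {ffun 'I_N -> 'I_N}) : R :=
  ([forall j, g j == i])%:R.

Lemma phi_single N (i : 'I_N) g : (phi (single i) g == allM N) = [forall j, g j == i].
Proof.
apply/eqP/forallP => [H j | H].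
  by have := congr1 (fun f : state N => f j) H; rewrite !ffunE.
by apply/ffunP => j; rewrite !ffunE H.
Qed.

Definition cst (R : realType) (N : nat) (g : {ffun 'I_N -> 'I_N}) : R :=
  \sum_i fi R i g.

Lemma cstE (R : realType) N (g : {ffun 'I_N -> 'I_N}) :
  cst R g = ([exists i, [forall j, g j == i]])%:R.
Proof.
rewrite /cst; case: (boolP [exists i, _]) => [/existsP [i Hi] | H].
  rewrite (bigD1 i) //= /fi Hi big1 ?addr0 // => i' ne.
  case: (boolP [forall j, g j == i']) => // /forallP H'.
  by move: ne; have := H' i; rewrite (eqP ((forallP Hi) i)) eq_sym => ->.
apply: big1 => i _; rewrite /fi.
by move/existsPn: H => /(_ i) /negbTE ->.
Qed.

Lemma fi_incr (R : realType) N (i : 'I_N) (a : event N) g : fi R i g <= fi R i (gstep a g).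
Proof.
rewrite /fi; case: (boolP [forall j, g j == i]) => H; last by rewrite ler0n.
have -> // : [forall j, gstep a g j == i].
by apply/forallP => j; rewrite ffunE; case: (a j) => *; exact: (forallP H).
Qed.

Lemma cst_incr (R : realType) N (a : event N) g : cst R g <= cst R (gstep a g).
Proof. by apply: ler_sum => i _; exact: fi_incr. Qed.

Lemma cst01 (R : realType) N (g : {ffun 'I_N -> 'I_N}) : 0 <= cst R g <= 1.
Proof. by rewrite cstE; case: ([exists i, _]); rewrite ?ler01 ?lexx. Qed.

Lemma Ex_le_n (R : realType) N T (p : event N -> R) n k f x :
  (forall a, 0 <= p a) -> \sum_a p a = 1 ->
  (forall a y, f y <= f (gstep a y)) -> (n <= k)%N ->
  @Ex R N T p n f x <= Ex p k f x.
Proof.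
move=> p0 p1 H /subnKC <-; elim: (k - n)%N => [|j IH]; first by rewrite addn0.
by apply: le_trans IH _; rewrite addnS; exact: Ex_incr.
Qed.

Lemma Ex_cst (R : realType) N T (p : event N -> R) n c x :
  \sum_a p a = 1 -> @Ex R N T p n (fun _ => c) x = c.
Proof.
move=> p1; elim: n x => [|n IH] x //=.
by under eq_bigr do rewrite IH; rewrite -big_distrl /= p1 mul1r.
Qed.

Unset Implicit Arguments.
Local Close Scope classical_set_scope.

Theorem mainTheorem1 (R : realType) (N : nat) (p : event N -> R) (u : R) :
  is_replacement_rule p ->
  fixation_assumption p ->
  0 < Btot p ->
  0 < u ->
  (exists d : R, forall i : 'I_N, death p i = d) ->
  rho_overall p = (N%:R)^-1 /\ Kclock p u = u.
Proof.
Local Open Scope classical_set_scope.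
move=> [p0 p1] [i0 [l0 [Hpos Hfix]]] HB u0 [d Hd].
pose m := size l0; pose q := \prod_(a <- l0) p a.
have pa1 : forall a, p a <= 1.
  by move=> a; rewrite -p1 (bigD1 a) //= lerDl sumr_ge0.
have q0 : 0 < q by rewrite /q big_seq; apply: prodr_gt0 => a /(allP Hpos).
have q1 : q <= 1 by apply: prodr_ile1 => a _; rewrite p0 pa1.
pose g0 : {ffun 'I_N -> 'I_N} := [ffun j => j].
pose v i n := Ex p n (@fi R N i) g0.
have rhoE : forall i, rho_site p i = limn (v i).
  move=> i; rewrite /rho_site.
  suff -> : (fun n => nstep p n (single i) (allM N)) = v i by [].
  apply/funext => n; rewrite nstepE.
  have -> : single i = phi (single i) g0 by apply/ffunP => j; rewrite !ffunE.
  rewrite Ex_comp; last first.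
    by move=> a y; apply: phi_step.
  rewrite /v.
  by apply: Ex_ext => y; rewrite phi_single.
have fi01 : forall (i : 'I_N) (g : {ffun 'I_N -> 'I_N}), 0 <= fi R i g <= 1 by move=> i g; rewrite /fi; case: [forall j, g j == i]; rewrite ?ler01 ?lexx.
have v_nd : forall i, nondecreasing_seq (v i).
  move=> i; apply/nondecreasing_seqP => n; apply: Ex_incr => //; exact: fi_incr.
have v_le1 : forall i n, v i n <= 1.
  move=> i n; rewrite -(@Ex_cst R N _ p n 1 g0) //; apply: Ex_mono => // y.
  by case/andP: (fi01 i y).
have v_cvg : forall i, cvgn (v i).
  move=> i; apply: nondecreasing_is_cvgn => //; exists 1 => _ [n _ <-]; exact: v_le1.
pose S n := \sum_i v i n.
have SE : forall n, S n = Ex p n (@cst R N) g0 by move=> n; rewrite /S /cst Ex_sum.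
have S_cvg : S @ \oo --> \sum_i limn (v i).
  apply: cvg_big; first exact: add_continuous.
  by move=> i _; exact: v_cvg.
have limS : limn S = \sum_i limn (v i) by exact: cvg_lim.
have S_nd : nondecreasing_seq S.
  apply/nondecreasing_seqP => n; rewrite !SE; apply: Ex_incr => //; exact: cst_incr.
have block : forall z : {ffun 'I_N -> 'I_N}, q + (1 - q) * cst R z <= Ex p m (@cst R N) z.
  move=> z; rewrite cstE; case: (boolP [exists i, _]) => H /=.
    rewrite mulr1 addrC subrK.
    have := @Ex_le_n R N _ p 0 m (@cst R N) z p0 p1 (@cst_incr R N) (leq0n m).
    by rewrite /= cstE H.
  rewrite mulr0 addr0; have cst0 : forall y : {ffun 'I_N -> 'I_N}, 0 <= cst R y by move=> y; case/andP: (cst01 R y).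
  apply: (le_trans _ (@Ex_path R N _ p (@cst R N) l0 z p0 cst0)).
  suff -> : cst R (grun l0 z) = 1 by rewrite mulr1.
  rewrite cstE; have -> // : [exists i, [forall j, grun l0 z j == i]].
  apply/existsP; exists (z i0); apply/forallP => j.
  pose sz : state N := [ffun k => k == z i0].
  have := Hfix (phi sz z) j; rewrite run_phi !ffunE eqxx.
  by move=> ->.
have iter : forall k (y : {ffun 'I_N -> 'I_N}), 1 - (1 - q) ^+ k <= Ex p (k * m) (@cst R N) y.
  elim=> [|k IH] y.
    by rewrite expr0 subrr mul0n /=; case/andP: (cst01 R y).
  rewrite mulSn addnC Ex_add.
  apply: (@le_trans _ _ (Ex p (k * m) (fun z => q + (1 - q) * cst R z) y)); last first.
    by apply: Ex_mono.
  rewrite Ex_affine // exprS.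
  apply: (@le_trans _ _ (q + (1 - q) * (1 - (1 - q) ^+ k))).
    by rewrite le_eqVlt; apply/orP; left; apply/eqP; ring.
  by rewrite lerD2l ler_wpM2l // subr_ge0.
have SL : \sum_i limn (v i) = 1.
  rewrite -limS; apply/eqP; rewrite eq_le; apply/andP; split.
    apply: limr_le; first by apply: cvgP S_cvg.
    apply: nearW => n /=; rewrite SE.
    rewrite -(@Ex_cst R N _ p n 1 g0) //; apply: Ex_mono => // y.
    by case/andP: (cst01 R y).
  have H : forall k, 1 - limn S <= (1 - q) ^+ k.
    move=> k; have := nondecreasing_cvgn_le S_nd (cvgP _ S_cvg) (k * m).
    rewrite SE => H; have := iter k g0; lra.
  have Hc : (GRing.exp (1 - q) : R ^nat) @ \oo --> 0.
    apply: cvg_expr; rewrite ger0_norm ?subr_ge0 //; lra.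
  have : 1 - limn S <= 0.
    rewrite -(cvg_lim _ Hc) //; apply: limr_ge; first by apply: cvgP Hc.
    by apply: nearW => k; exact: H k.
  lra.
have HBt : Btot p = N%:R * d.
  rewrite /Btot exchange_big /=.
  under eq_bigr do rewrite -/(death p _) Hd.
  by rewrite sumr_const card_ord mulr_natl.
have rhoS : rho_overall p = (N%:R)^-1.
  rewrite /rho_overall HBt.
  under eq_bigr do rewrite Hd rhoE.
  rewrite -big_distrr /= SL mulr1.
  have dn0 : d != 0 by apply/eqP => d0; move: HB; rewrite HBt d0 mulr0 ltxx.
  by rewrite invfM -mulrA mulVf // mulr1.
split => //.
rewrite /Kclock rhoS.
have Nn0 : N%:R != 0 :> R.
  apply/eqP => N0; move: HB; rewrite HBt N0 mul0r ltxx //.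
by rewrite mulrAC mulfV // mul1r.
Qed.
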